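(* Let $\Sigma=\{a,b,c\}$ and let $\mathfrak{A}$ be the architecture with $\mathsf{Procs}=\{p_1,p_2\}$, $\mathsf{DS}=\mathsf{Queues}=\{c_1,c_2\}$ (no stacks, no bags), $\mathsf{Writer}(c_1)=\mathsf{Reader}(c_2)=p_1$ and $\mathsf{Writer}(c_2)=\mathsf{Reader}(c_1)=p_2$. There is a sentence $\varphi\in\mathsf{MSO}(\mathfrak{A},\Sigma)$ such that for every CPDS $\mathcal{S}$ over $\mathfrak{A}$ and $\Sigma$ we have $L(\mathcal{S})\neq L(\varphi)$.
   Context: An architecture is $\mathfrak{A}=(\mathsf{Procs},\mathsf{DS},\mathsf{Writer},\mathsf{Reader})$ with $\mathsf{DS}=\mathsf{Stacks}\uplus\mathsf{Queues}\uplus\mathsf{Bags}$ and $\mathsf{Writer},\mathsf{Reader}:\mathsf{DS}\to\mathsf{Procs}$. A CBM over $\mathfrak{A}$ and $\Sigma$ is $\mathcal{M}=((w_p)_{p\in\mathsf{Procs}},(\rhd^d)_{d\in\mathsf{DS}})$ with $w_p\in\Sigma^*$; events $\mathcal{E}=\bigcup_p\{(p,i)\mid1\le i\le|w_p|\}$, process successor $(p,i)\to(p,i+1)$, $\mathsf{pid}((p,i))=p$, $\lambda((p,i))$ the $i$-th letter of $w_p$; $\rhd^d\subseteq\mathcal{E}_{\mathsf{Writer}(d)}\times\mathcal{E}_{\mathsf{Reader}(d)}$ such that distinct edges (over all $d$) have four distinct endpoints, $<=(\to\cup\bigcup_d\rhd^d)^+$ is a strict partial order, and for each queue $d$, $e_1\rhd^d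 f_1$, $e_2\rhd^d f_2$, $e_1<e_2$ imply $f_1<f_2$ (and for stacks, $e_1<e_2<f_1$ implies $f_2<f_1$). A CPDS $\mathcal{S}=(\mathsf{Locs},\mathsf{Val},(\to_p)_p,\ell_{in},\mathsf{Fin})$ has nonempty finite $\mathsf{Locs},\mathsf{Val}$, $\ell_{in}\in\mathsf{Locs}$, $\mathsf{Fin}\subseteq\mathsf{Locs}^{\mathsf{Procs}}$ and finite transition sets $\to_p$ with transitions $\ell\xrightarrow{a}_p\ell'$, $\ell\xrightarrow{a,d!v}_p\ell'$ ($\mathsf{Writer}(d)=p$), $\ell\xrightarrow{a,d?v}_p\ell'$ ($\mathsf{Reader}(d)=p$). A run on a CBM is $\rho:\mathcal{E}\to\mathsf{Locs}$ such that, with $\rho^-(e)$ the value of $\rho$ at the $\to$-predecessor of $e$ or $\ell_{in}$ if none: events incident to no $\rhd$-edge use an internal transition $\rho^-(e)\xrightarrow{\lambda(e)}_{\mathsf{pid}(e)}\rho(e)$, and for each $e\rhd^d f$ some $v$ gives transitions $\rho^-(e)\xrightarrow{\lambda(e),d!v}\rho(e)$ and $\rho^-(f)\xrightarrow{\lambda(f),d?v}\rho(f)$. It is accepting if the tuple of last locations of each process ($\ell_{in}$ for processes with no events) is in $\mathsf{Fin}$. $L(\mathcal{S})$ = CBMs with an accepting run. $\mathsf{MSO}(\mathfrak{A},\Sigma)$: $\varphi::=a(x)\mid p(x)\mid x=y\mid x\rhd^d y\mid x\to y\mid x\in X\mid\varphi\vee\varphi\mid\neg\varphi\mid\exists x\varphi\mid\exists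 X\varphi$, interpreted over CBMs in the standard way ($a(x)$: $\lambda(x)=a$; $p(x)$: $\mathsf{pid}(x)=p$). $L(\varphi)$ is the set of CBMs satisfying sentence $\varphi$. *)

(* Defs.v *)
From HB Require Import structures.
From Stdlib Require Import Relations.
From mathcomp Require Import all_boot.
Set Implicit Arguments. Unset Strict Implicit. Unset Printing Implicit Defensive.

Inductive dskind := Stack | Queue | Bag.

Record arch := Arch {
  Procs : finType;
  DS : Type;
  kind : DS -> dskind;          (* DS = Stacks ⊎ Queues ⊎ Bags *)
  Writer : DS -> Procs;
  Reader : DS -> Procs }.

(* Events are pairs (p, i) with i < |w_p|; indices are 0-based here    *)
(* (event (p,i) here is event (p,i+1) of the paper).                   *)
Section CBM.
Variables (A : arch) (Sigma : Type).

Definition event := (Procs A * nat)%type.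

Record cbm := CBM {
  word : Procs A -> seq Sigma;
  edge : DS A -> event -> event -> Prop }.

Definition is_event (M : cbm) (e : event) : Prop := e.2 < size (word M e.1).

Definition pid (e : event) : Procs A := e.1.

Definition lab (M : cbm) (x0 : Sigma) (e : event) : Sigma :=
  nth x0 (word M e.1) e.2.

Definition succ (M : cbm) (e f : event) : Prop :=
  is_event M e /\ is_event M f /\ f.1 = e.1 /\ f.2 = e.2.+1.

Definition step (M : cbm) (e f : event) : Prop :=
  succ M e f \/ exists d, edge M d e f.

Definition lt_ev (M : cbm) : relation event := clos_trans event (step M).

Definition is_cbm (M : cbm) : Prop :=
  (forall d e f, edge M d e f ->
     is_event M e /\ is_event M f /\ e.1 = Writer d /\ f.1 = Reader d) /\
  (forall d e f d' e' f', edge M d e f -> edge M d' e' f' ->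
     (d, e, f) <> (d', e', f') ->
     [/\ e <> e', e <> f', f <> e' & f <> f']) /\
  (* < is a strict partial order (it is transitive by construction) *)
  (forall e, ~ lt_ev M e e) /\
  (forall d e1 f1 e2 f2, kind d = Queue -> edge M d e1 f1 -> edge M d e2 f2 ->
     lt_ev M e1 e2 -> lt_ev M f1 f2) /\
  (forall d e1 f1 e2 f2, kind d = Stack -> edge M d e1 f1 -> edge M d e2 f2 ->
     lt_ev M e1 e2 -> lt_ev M e2 f1 -> lt_ev M f2 f1).

End CBM.

(* Transition sets are finite since Locs, Val are finite types and the *)
(* transition relations are boolean predicates.  Write transitions     *)
(* d!v and read transitions d?v are indexed by d and belong to the     *)
(* processes Writer d and Reader d respectively.                       *)
Record cpds (A : arch) (Sigma : Type) := CPDS {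
  Locs : finType;
  Val : finType;
  val_inhab : Val;
  l_in : Locs;
  Fin : {set {ffun Procs A -> Locs}};
  tr_int : Procs A -> Locs -> Sigma -> Locs -> bool;
  tr_send : DS A -> Locs -> Sigma -> Val -> Locs -> bool;
  tr_recv : DS A -> Locs -> Sigma -> Val -> Locs -> bool
}.

Section Run.
Variables (A : arch) (Sigma : Type) (x0 : Sigma) (S : cpds A Sigma).

Definition rho_minus (rho : event A -> Locs S) (e : event A) : Locs S :=
  if e.2 is i.+1 then rho (e.1, i) else l_in S.

Definition is_run (M : cbm A Sigma) (rho : event A -> Locs S) : Prop :=
  (forall e, is_event M e ->
     (forall d f, ~ edge M d e f /\ ~ edge M d f e) ->
     @tr_int A Sigma S (pid e) (rho_minus rho e) (lab M x0 e) (rho e)) /\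
  (forall d e f, edge M d e f -> exists v : Val S,
     @tr_send A Sigma S d (rho_minus rho e) (lab M x0 e) v (rho e) /\
     @tr_recv A Sigma S d (rho_minus rho f) (lab M x0 f) v (rho f)).

(* last location of each process: rho at (p, |w_p| - 1), or l_in *)
Definition accepting (M : cbm A Sigma) (rho : event A -> Locs S) : Prop :=
  [ffun p => rho_minus rho (p, size (word M p))] \in @Fin A Sigma S.

Definition in_L_cpds (M : cbm A Sigma) : Prop :=
  is_cbm M /\ exists rho, is_run M rho /\ accepting M rho.

End Run.

Inductive mso (A : arch) (Sigma : Type) :=
| Lab of Sigma & nat
| Pid of Procs A & nat
| Eq of nat & nat
| Edge of DS A & nat & nat
| Succ of nat & nat
| Mem of nat & nat
| Or of mso A Sigma & mso A Sigma
| Not of mso A Sigma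
| Ex1 of nat & mso A Sigma
| Ex2 of nat & mso A Sigma.

Section MSOsem.
Variables (A : arch) (Sigma : Type) (x0 : Sigma).

Fixpoint free1 (phi : mso A Sigma) (x : nat) : bool :=
  match phi with
  | Lab _ y | Pid _ y => y == x
  | Eq y z | Edge _ y z | Succ y z => (y == x) || (z == x)
  | Mem y _ => y == x
  | Or p q => free1 p x || free1 q x
  | Not p => free1 p x
  | Ex1 y p => (y != x) && free1 p x
  | Ex2 _ p => free1 p x
  end.

Fixpoint free2 (phi : mso A Sigma) (X : nat) : bool :=
  match phi with
  | Mem _ Y => Y == X
  | Or p q => free2 p X || free2 q X
  | Not p | Ex1 _ p => free2 p X
  | Ex2 Y p => (Y != X) && free2 p X
  | _ => false
  end.

Definition sentence (phi : mso A Sigma) : Prop :=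
  forall x, ~~ free1 phi x /\ ~~ free2 phi x.

Fixpoint sat (M : cbm A Sigma) (nu1 : nat -> event A)
    (nu2 : nat -> event A -> Prop) (phi : mso A Sigma) : Prop :=
  match phi with
  | Lab a x => lab M x0 (nu1 x) = a
  | Pid p x => pid (nu1 x) = p
  | Eq x y => nu1 x = nu1 y
  | Edge d x y => edge M d (nu1 x) (nu1 y)
  | Succ x y => succ M (nu1 x) (nu1 y)
  | Mem x X => nu2 X (nu1 x)
  | Or p q => sat M nu1 nu2 p \/ sat M nu1 nu2 q
  | Not p => ~ sat M nu1 nu2 p
  | Ex1 x p => exists e, is_event M e /\
                 sat M (fun y => if y == x then e else nu1 y) nu2 p
  | Ex2 X p => exists E : event A -> Prop,
                 sat M nu1 (fun Y => if Y == X then E else nu2 Y) p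
  end.

(* For a sentence the (arbitrary) initial valuation is irrelevant. *)
Definition in_L_mso (phi : mso A Sigma) (M : cbm A Sigma) : Prop :=
  is_cbm M /\ forall nu1 nu2, sat M nu1 nu2 phi.

End MSOsem.

Inductive proc := p1 | p2.
Definition proc_to_bool (p : proc) : bool := if p is p1 then true else false.
Definition bool_to_proc (b : bool) : proc := if b then p1 else p2.
Lemma proc_K : cancel proc_to_bool bool_to_proc. Proof. by case. Qed.
HB.instance Definition _ := Equality.copy proc (can_type proc_K).
HB.instance Definition _ := Choice.copy proc (can_type proc_K).
HB.instance Definition _ := Countable.copy proc (can_type proc_K).
HB.instance Definition _ := Finite.copy proc (can_type proc_K).

Inductive chan := c1 | c2.
Inductive letter := la | lb | lc.

Definition chan_kind (d : chan) : dskind := Queue.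
Definition writer (d : chan) : proc := if d is c1 then p1 else p2.
Definition reader (d : chan) : proc := if d is c1 then p2 else p1.

Definition A2 : arch := @Arch proc chan chan_kind writer reader.

(* Main.v *)
From Pilot Require Import Defs.
From HB Require Import structures.
From mathcomp Require Import all_boot.
From Stdlib Require Import Relations Classical IndefiniteDescription.
From mathcomp Require Import zify.
Set Implicit Arguments. Unset Strict Implicit. Unset Printing Implicit Defensive.

Definition NN (n : nat) := n * n.+1.
Definition TT (n : nat) := 2 * NN n.

Definition cont n (x y : seq bool) (j : nat) : bool :=
  if j < NN n then nth false x j else nth false y (j - NN n).

Definition wordf n (x y : seq bool) (p : proc) : seq letter :=
  match p with
  | p1 => mkseq (fun i => if odd i then (if cont n x y i./2 then la else lb) else la) (2 * TT n)
  | p2 => nseq (2 * TT n) la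
  end.

Definition edgef n (d : chan) (e f : event A2) : Prop :=
  match d with
  | c1 => exists k, k < TT n /\ e = (p1, 2*k+1) /\ f = (p2, 2*k)
  | c2 => exists k, k + n < TT n /\ e = (p2, 2*k+1) /\ f = (p1, 2*(k+n))
  end.

Definition MM n x y : cbm A2 letter := @CBM A2 letter (wordf n x y) (edgef n).

Lemma size_w n x y p : size (wordf n x y p) = 2 * TT n.
Proof. by case: p; rewrite /= ?size_mkseq ?size_nseq. Qed.

Lemma is_eventE n x y e : is_event (MM n x y) e <-> e.2 < 2 * TT n.
Proof. by rewrite /is_event /= size_w. Qed.

Definition tau (e : event A2) : nat := 2 * e.2 + (if e.1 is p2 then 3 else 0).

Lemma step_tau n x y e f : 1 < n -> step (MM n x y) e f -> tau e < tau f.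
Proof.
move=> n2 [[_ [_ [E1 E2]]]|[[] /= [k [_ [-> ->]]]]].
  rewrite /tau E1 E2; case: e.1 => /=; lia.
 rewrite /tau /=; lia.
rewrite /tau /=; lia.
Qed.

Lemma lt_tau n x y e f : 1 < n -> lt_ev (MM n x y) e f -> tau e < tau f.
Proof.
move=> n2; elim=> [a b /(step_tau n2) //|a b c _ h1 _ h2]; exact: ltn_trans h1 h2.
Qed.

Lemma chain n x y p i d : i + d.+1 < 2 * TT n -> lt_ev (MM n x y) (p, i) (p, i + d.+1).
Proof.
elim: d => [|d IH] h.
  apply: t_step; left; rewrite /succ !is_eventE /=; split; [lia|split;[lia|split=>//]]; lia.
apply: (t_trans _ _ _ (p, i + d.+1)); first by apply: IH; lia.
apply: t_step; left; rewrite /succ !is_eventE /=; split; [lia|split;[lia|split=>//]]; lia.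
Qed.

Lemma chain' n x y p i j : i < j -> j < 2 * TT n -> lt_ev (MM n x y) (p, i) (p, j).
Proof. move=> ij jT; have -> : j = i + (j - i.+1).+1 by lia. apply: chain; lia. Qed.

Lemma MM_cbm n x y : 1 < n -> is_cbm (MM n x y).
Proof.
move=> n2; split; last split; last split; last split.
- case=> e f /= [k [kT [-> ->]]]; rewrite !is_eventE /=; do !split => //; lia.
- case=> e f [] e' f' /= [k [kT [-> ->]]] [k' [kT' [-> ->]]] ne;
  try (have nk : k <> k' by move=> E; apply: ne; rewrite E);
  split; move=> H; (discriminate || (injection H; lia)).
- move=> e /(lt_tau n2); lia.
- case=> e1 f1 e2 f2 _ /= [k [kT [-> ->]]] [k' [kT' [-> ->]]] /(lt_tau n2); rewrite /tau /= => h;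
  apply: chain'; lia.
- by move=> [].
Qed.

Notation F := (mso A2 letter).
Notation AndF p q := (Not (Or (Not p) (Not q))).
Notation ImpF p q := (Or (Not p) q).
Notation All1F x p := (Not (Ex1 x (Not p))).
Notation All2F X p := (Not (Ex2 X (Not p))).
Notation mEq x y := (@Eq A2 letter x y).
Notation mEdge d x y := (@Edge A2 letter d x y).
Notation mSucc x y := (@Succ A2 letter x y).
Notation mMem x X := (@Pilot.Defs.Mem A2 letter x X).
Notation mLab a x := (@Lab A2 letter a x).

Definition Rf (a b : nat) : F :=
  Ex1 2 (Ex1 3 (Ex1 4 (AndF (mEdge c1 a 2) (AndF (mSucc 2 3) (AndF (mEdge c2 3 4) (mSucc 4 b)))))).
Definition Df (a b : nat) : F :=
  Ex1 5 (Ex1 6 (AndF (Rf a 5) (AndF (mSucc 5 6) (mSucc 6 b)))).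
Definition Clo (st : F) : F :=
  All2F 0 (ImpF (AndF (mMem 0 0) (All1F 7 (All1F 8 (ImpF (AndF (mMem 7 0) st) (mMem 8 0))))) (mMem 1 0)).
Definition phi : F :=
  All1F 0 (All1F 1 (ImpF (AndF (Not (mEq 0 1)) (AndF (Clo (Rf 7 8)) (Clo (Df 7 8))))
     (AndF (ImpF (mLab la 0) (mLab la 1)) (ImpF (mLab la 1) (mLab la 0))))).

Lemma phi_sentence : sentence phi.
Proof. move=> x; do 10 (case: x => [|x] //). Qed.

Section Sem.
Variable M : cbm A2 letter.

Lemma sat_and nu1 nu2 (p q : F) : sat la M nu1 nu2 (AndF p q) <-> sat la M nu1 nu2 p /\ sat la M nu1 nu2 q.
Proof. simpl; split; [move=> H; split; apply: NNPP; tauto | tauto]. Qed.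
Lemma sat_imp nu1 nu2 (p q : F) : sat la M nu1 nu2 (ImpF p q) <-> (sat la M nu1 nu2 p -> sat la M nu1 nu2 q).
Proof. simpl; split; [tauto| move=> H; case: (classic (sat la M nu1 nu2 p)); tauto]. Qed.
Lemma sat_all1 nu1 nu2 x (p : F) : sat la M nu1 nu2 (All1F x p) <->
  (forall e, is_event M e -> sat la M (fun y => if y == x then e else nu1 y) nu2 p).
Proof. simpl; split=> H.
  by move=> e ev; apply: NNPP => h; apply: H; exists e.
by case=> e [ev]; apply; apply: H. Qed.
Lemma sat_all2 nu1 nu2 X (p : F) : sat la M nu1 nu2 (All2F X p) <->
  (forall E, sat la M nu1 (fun Y => if Y == X then E else nu2 Y) p).
Proof. simpl; split=> H.
  by move=> E; apply: NNPP => h; apply: H; exists E.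
by case=> E; apply; apply: H. Qed.

Definition Rsem (e f : event A2) := exists z1 z2 z3, is_event M z1 /\ is_event M z2 /\ is_event M z3 /\
  edge M c1 e z1 /\ succ M z1 z2 /\ edge M c2 z2 z3 /\ succ M z3 f.
Definition Dsem (e f : event A2) := exists w u, is_event M w /\ is_event M u /\
  Rsem e w /\ succ M w u /\ succ M u f.

Lemma satR a b nu1 nu2 : a != 2 -> a != 3 -> a != 4 -> b != 2 -> b != 3 -> b != 4 ->
  sat la M nu1 nu2 (Rf a b) <-> Rsem (nu1 a) (nu1 b).
Proof.
move=> /negbTE a2 /negbTE a3 /negbTE a4 /negbTE b2 /negbTE b3 /negbTE b4.
split.
  case=> z1 [e1 [z2 [e2 [z3 [e3 H]]]]].
  move: H; rewrite /= a2 a3 a4 b2 b3 b4 /= => H.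
  exists z1, z2, z3; do 3 (split=> //); apply: NNPP; tauto.
case=> z1 [z2 [z3 [e1 [e2 [e3 [h1 [h2 [h3 h4]]]]]]]].
exists z1; split=> //; exists z2; split=> //; exists z3; split=> //.
rewrite /= a2 a3 a4 b2 b3 b4 /=; tauto.
Qed.

Lemma sat_ex1 nu1 nu2 x (p : F) : sat la M nu1 nu2 (Ex1 x p) <->
  exists e, is_event M e /\ sat la M (fun y => if y == x then e else nu1 y) nu2 p.
Proof. by []. Qed.

Lemma satD nu1 nu2 : sat la M nu1 nu2 (Df 7 8) <-> Dsem (nu1 7) (nu1 8).
Proof.
split.
  move/sat_ex1 => [w [ew /sat_ex1 [u [eu /sat_and [h1 /sat_and [h2 h3]]]]]].
  move/satR: h1 => /(_ isT isT isT isT isT isT) /= h1.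
  by exists w, u.
case=> w [u [ew [eu [h1 [h2 h3]]]]].
apply/sat_ex1; exists w; split=> //; apply/sat_ex1; exists u; split=> //.
apply/sat_and; split; first by apply/satR.
by apply/sat_and; split.
Qed.

Definition restr (S : event A2 -> event A2 -> Prop) e f := is_event M e /\ is_event M f /\ S e f.

Lemma satClo nu1 nu2 (st : F) (S : event A2 -> event A2 -> Prop) :
  (forall nu1' nu2', sat la M nu1' nu2' st <-> S (nu1' 7) (nu1' 8)) ->
  (sat la M nu1 nu2 (Clo st) <-> clos_refl_trans _ (restr S) (nu1 0) (nu1 1)).
Proof.
move=> Hst; split.
  move/sat_all2 => /(_ (clos_refl_trans _ (restr S) (nu1 0))) /sat_imp; apply.
  apply/sat_and; split; first exact: rt_refl.
  apply/sat_all1 => z ez; apply/sat_all1 => w ew; apply/sat_imp => /sat_and [hz /Hst hs].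
  move: hz hs => /= hz hs; apply: rt_trans hz _; apply: rt_step; by do !split.
move=> Hr; apply/sat_all2 => E; apply/sat_imp => /sat_and [h0 /sat_all1 hcl].
move: h0 => /= h0.
apply clos_rt_rtn1 in Hr; elim: Hr => [//|y z [ey [ez hs]] _ IH].
move: (hcl y ey) => /sat_all1 /(_ z ez) /sat_imp; apply.
apply/sat_and; split=> //; apply/Hst => //.
Qed.

Lemma sat_phi nu1 nu2 : sat la M nu1 nu2 phi <->
  (forall e f, is_event M e -> is_event M f -> e <> f ->
     clos_refl_trans _ (restr Rsem) e f -> clos_refl_trans _ (restr Dsem) e f ->
     (lab M la e = la <-> lab M la f = la)).
Proof.
have HR : forall nu1' nu2', sat la M nu1' nu2' (Rf 7 8) <-> Rsem (nu1' 7) (nu1' 8).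
  by move=> ? ?; apply: satR.
have HD : forall nu1' nu2', sat la M nu1' nu2' (Df 7 8) <-> Dsem (nu1' 7) (nu1' 8).
  by move=> ? ?; apply: satD.
split.
  move/sat_all1 => H e f ee ef ne hr hd.
  move: (H e ee) => /sat_all1 /(_ f ef) /sat_imp H2.
  have : sat la M (fun y => if y == 1 then f else if y == 0 then e else nu1 y) nu2
     (AndF (ImpF (mLab la 0) (mLab la 1)) (ImpF (mLab la 1) (mLab la 0))).
    apply: H2; apply/sat_and; split; first by [].
    by apply/sat_and; split; [apply/(satClo _ _ HR) | apply/(satClo _ _ HD)].
  by move/sat_and => [/sat_imp i1 /sat_imp i2]; split; [apply: i1 | apply: i2].
move=> H; apply/sat_all1 => e ee; apply/sat_all1 => f ef; apply/sat_imp.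
move/sat_and => [ne /sat_and [/(satClo _ _ HR) hr /(satClo _ _ HD) hd]].
have [i1 i2] := H e f ee ef ne hr hd.
by apply/sat_and; split; apply/sat_imp => /=; [apply: i1|apply: i2].
Qed.
End Sem.

Section Skel.
Variables (n : nat) (x y : seq bool).
Hypothesis n2 : 1 < n.
Notation M := (MM n x y).

Lemma succE e f : succ M e f <-> e.2 < 2 * TT n /\ f.2 < 2 * TT n /\ f.1 = e.1 /\ f.2 = e.2.+1.
Proof. by rewrite /succ !is_eventE. Qed.

Lemma RsemE e f : Rsem M e f -> exists k, k + n < TT n /\ e = (p1, 2*k+1) /\ f = (p1, 2*(k+n)+1).
Proof.
case=> z1 [z2 [z3 [_ [_ [_ [h1 [h2 [h3 h4]]]]]]]].
case: h1 => k [kT [Ee Ez1]]; case: h3 => k' [kT' [Ez2 Ez3]].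
move/succE: h2 => [_ [_ [E1 E2]]]; move/succE: h4 => [_ [_ [E4 E5]]].
subst e z1 z3; rewrite Ez2 /= in E1 E2.
have kk : k = k' by lia.
subst k'; exists k; split=> //; split=> //.
by case: f E4 E5 => [f1 f2] /= -> ->; congr pair; lia.
Qed.

Lemma RsemI k : k + n < TT n -> Rsem M (p1, 2*k+1) (p1, 2*(k+n)+1).
Proof.
move=> kT; exists (p2, 2*k), (p2, 2*k+1), (p1, 2*(k+n)).
rewrite !is_eventE /=; do 3 (split; first lia).
split; first by exists k; split=> //; lia.
split; first by apply/succE => /=; do !split => //; lia.
split; first by exists k.
by apply/succE => /=; do !split => //; lia.
Qed.

Lemma DsemE e f : Dsem M e f -> exists k, k + n.+1 < TT n /\ e = (p1, 2*k+1) /\ f = (p1, 2*(k+n.+1)+1).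
Proof.
case=> w [u [_ [_ [h1 [h2 h3]]]]].
case/RsemE: h1 => k [kT [Ee Ew]]; subst e w.
move/succE: h2 => [_ [u2 [E1 E2]]]; move/succE: h3 => [_ [f2 [E3 E4]]].
exists k; split; first by move: f2; rewrite E4 E2 /=; lia.
split=> //.
case: f E3 E4 f2 => [f1 f2'] /= -> -> _; rewrite E1 E2 /=; congr pair; lia.
Qed.

Lemma DsemI k : k + n.+1 < TT n -> Dsem M (p1, 2*k+1) (p1, 2*(k+n.+1)+1).
Proof.
move=> kT; exists (p1, 2*(k+n)+1), (p1, 2*(k+n)+2).
rewrite !is_eventE /=; do 2 (split; first lia).
split; first by apply: RsemI; lia.
split; first by apply/succE => /=; do !split => //; lia.
by apply/succE => /=; do !split => //; lia.
Qed.

Lemma reachE c (S : event A2 -> event A2 -> Prop) :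
  (forall e f, S e f -> exists k, e = (p1, 2*k+1) /\ f = (p1, 2*(k+c)+1)) ->
  forall e f, clos_refl_trans _ (restr M S) e f ->
  e = f \/ exists k j, 0 < j /\ e = (p1, 2*k+1) /\ f = (p1, 2*(k + j*c)+1).
Proof.
move=> HS e f H; apply clos_rt_rt1n in H; elim: H => [a|a b d [_ [_ /HS [k [-> ->]]]] _ IH]; first by left.
right; case: IH => [<-|[k' [j [j0 [E ->]]]]]; first by exists k, 1; rewrite mul1n.
exists k, j.+1; split=> //; split=> //.
move: E => /pair_equal_spec [_ E]; congr pair; lia.
Qed.

Lemma reachI c (S : event A2 -> event A2 -> Prop) :
  (forall k, k + c < TT n -> restr M S (p1, 2*k+1) (p1, 2*(k+c)+1)) ->
  forall j k, k + j * c < TT n -> clos_refl_trans _ (restr M S) (p1, 2*k+1) (p1, 2*(k + j*c)+1).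
Proof.
move=> HS; elim=> [|j IH] k kT.
  by rewrite mul0n addn0; apply: rt_refl.
apply: rt_trans (IH k _) _; first by lia.
have -> : k + j.+1 * c = (k + j * c) + c by rewrite mulSn; lia.
apply: rt_step; apply: HS; lia.
Qed.

Lemma uniq_pair e f : is_event M f -> e <> f ->
  clos_refl_trans _ (restr M (Rsem M)) e f -> clos_refl_trans _ (restr M (Dsem M)) e f ->
  exists k, k < NN n /\ e = (p1, 2*k+1) /\ f = (p1, 2*(k + NN n)+1).
Proof.
move=> ef ne hr0 hd0.
have hr := reachE (c:=n) (S:=Rsem M) _ hr0.
have hd := reachE (c:=n.+1) (S:=Dsem M) _ hd0.
case: hr => [ | |[k [j [j0 [E1 E2]]]]] //.
  by move=> ? ? /RsemE [k0 [_ [-> ->]]]; exists k0.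
case: hd => [ | |[k' [j' [j0' [E1' E2']]]]] //.
  by move=> ? ? /DsemE [k0 [_ [-> ->]]]; exists k0.
rewrite E1 in E1'; move: E1' => /pair_equal_spec [_ kk]; have {kk} kk : k = k' by lia.
subst k'; rewrite E2 in E2'; move: E2' => /pair_equal_spec [_ E].
have {E} E : j * n = j' * n.+1 by lia.
move: ef; rewrite is_eventE E2 /= /TT /NN => ef.
have dv : n.+1 %| j.
  by rewrite -(Gauss_dvdl _ (coprimeSn n)) E dvdn_mull.
case/dvdnP: dv => q qE; subst j.
have q1 : q = 1.
  have q2 : q < 2.
    have h : q * (n * n.+1) < 2 * (n * n.+1) by move: ef; rewrite -mulnA (mulnC n.+1); lia.
    by rewrite ltn_mul2r in h; case/andP: h.
  by move: j0 q2; clear; case: q => [|[|q]] //=; rewrite mul0n.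
subst q; exists k; rewrite mul1n mulnC /NN; split; first lia.
by split.
Qed.

Lemma labE k : k < TT n -> lab M la (p1, 2*k+1) = if cont n x y k then la else lb.
Proof.
move=> kT; rewrite /lab /= nth_mkseq; last by lia.
have -> : odd (2 * k + 1) by rewrite addn1 mul2n /= odd_double.
by have -> : (2 * k + 1)./2 = k by rewrite addn1 mul2n /= uphalf_double.
Qed.

End Skel.

Lemma phi_xx n (x : seq bool) nu1 nu2 : 1 < n -> sat la (MM n x x) nu1 nu2 phi.
Proof.
move=> n2; apply/sat_phi => e f ee ef ne hr hd.
have [k [kN [Ee Ef]]] := uniq_pair n2 ef ne hr hd.
subst e f; move: ef; rewrite is_eventE /= => ef.
rewrite !labE; try (rewrite /TT; lia).
by rewrite /cont kN /= ltnNge leq_addl /= addnK.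
Qed.

Lemma phi_xy n (x y : seq bool) k nu1 nu2 : 1 < n -> k < NN n ->
  nth false x k != nth false y k -> ~ sat la (MM n x y) nu1 nu2 phi.
Proof.
move=> n2 kN nxy /sat_phi H.
have kT : k + NN n < TT n by rewrite /TT; lia.
have := H (p1, 2*k+1) (p1, 2*(k + NN n)+1).
rewrite !is_eventE /= => /(_ ltac:(lia) ltac:(lia)) H'.
have {H'} := H' ltac:(move=> /pair_equal_spec [_]; rewrite /NN; lia).
have hr : clos_refl_trans _ (restr (MM n x y) (Rsem (MM n x y))) (p1, 2*k+1) (p1, 2*(k + NN n)+1).
  have -> : NN n = n.+1 * n by rewrite /NN mulnC.
  apply: (reachI n2) => [k' k'T|]; last by rewrite /TT /NN in kT *; lia.
  rewrite /restr !is_eventE /=; split; first lia; split; first lia.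
  exact: (RsemI x y n2).
have hd : clos_refl_trans _ (restr (MM n x y) (Dsem (MM n x y))) (p1, 2*k+1) (p1, 2*(k + NN n)+1).
  apply: (reachI n2) => [k' k'T|]; last by rewrite /TT /NN in kT *; lia.
  rewrite /restr !is_eventE /=; split; first lia; split; first lia.
  exact: (DsemI x y n2).
move=> /(_ hr hd).
rewrite !labE; try (rewrite /TT; lia).
rewrite /cont kN /= ltnNge leq_addl /= addnK.
by move: nxy; case: (nth false x k); case: (nth false y k) => //= _ [h1 h2];
  [move: (h1 erefl) | move: (h2 erefl)].
Qed.

Lemma count_ineq L V B n : B = (L + V).+1 -> n = 2 * B + 2 ->
  L * L * V ^ n < 2 ^ (n * n.+1).
Proof.
move=> EB En.
have LB : L <= B by lia.
have VB : V <= B by lia.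
have h1 : L * L * V ^ n <= B ^ (n + 2).
  rewrite expnD mulnC; apply: leq_mul; first by rewrite leq_exp2r //; lia.
  by rewrite expnS expn1; apply: leq_mul.
have h2 : B ^ (n + 2) <= (B * B) ^ n.
  rewrite expnMn -expnD; apply: leq_pexp2l; lia.
have h3 : B * B < 2 ^ n.
  apply: (@leq_trans (2 ^ (2 * B))); last by rewrite leq_exp2l //; lia.
  rewrite mul2n -addnn expnD; apply: ltn_mul; exact: ltn_expl.
have h4 : (B * B) ^ n < 2 ^ (n * n).
  by rewrite expnM ltn_exp2r //; lia.
have h5 : 2 ^ (n * n) <= 2 ^ (n * n.+1) by rewrite leq_exp2l //; apply: leq_mul.
exact: leq_ltn_trans h1 (leq_ltn_trans h2 (leq_trans h4 h5)).
Qed.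

Section Paste.
Variables (n : nat) (S : cpds A2 letter).
Hypothesis n2 : 1 < n.

Definition bound (p : proc) := if p is p1 then 2 * NN n else 2 * (NN n - n).
Definition inD (e : event A2) : bool := e.2 < bound e.1.

Lemma labD x y e : lab (MM n x y) la e = if inD e then lab (MM n x x) la e else lab (MM n y y) la e.
Proof.
case: e => [[] i]; rewrite /lab /inD /=; last by case: ifP.
case: (ltnP i (2 * TT n)) => h; last by rewrite !nth_default ?size_mkseq //; case: ifP.
rewrite !nth_mkseq //; case: (odd i) => //; rewrite /cont.
case: (ltnP i (2 * NN n)) => hN.
  by have -> : i./2 < NN n by rewrite ltn_half_double -mul2n.
by have -> : i./2 < NN n = false by rewrite ltn_half_double -mul2n ltnNge hN.
by case: ifP. Qed.

Variables (rho1 rho2 : event A2 -> Locs S).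
Hypothesis agree : forall p, rho1 (p, (bound p).-1) = rho2 (p, (bound p).-1).
Definition rho (e : event A2) := if inD e then rho1 e else rho2 e.

Lemma rmD e : inD e -> rho_minus rho e = rho_minus rho1 e.
Proof.
case: e => p [|i] //; rewrite /inD /rho /rho_minus /= => h.
by have -> : inD (p, i) by rewrite /inD /=; lia.
Qed.

Lemma rmND e : ~~ inD e -> rho_minus rho e = rho_minus rho2 e.
Proof.
case: e => p [|i] //; rewrite /inD /rho /rho_minus /= => h.
case: ifP => // hi; rewrite /inD /= in hi.
have -> : i = (bound p).-1 by lia.
exact: agree.
Qed.

End Paste.

Definition Ei n (i : nat) : event A2 := (p1, 2 * (NN n - n + i) + 1).
Definition Fi n (i : nat) : event A2 := (p2, 2 * (NN n - n + i)).

Section Paste2.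
Variables (n : nat) (S : cpds A2 letter).
Hypothesis n2 : 1 < n.
Variables (x y : seq bool) (rho1 rho2 : event A2 -> Locs S) (vals : {ffun 'I_n -> Val S}).
Hypothesis agree : forall p, rho1 (p, (bound n p).-1) = rho2 (p, (bound n p).-1).
Hypothesis R1 : is_run la (MM n x x) rho1.
Hypothesis R2 : is_run la (MM n y y) rho2.
Hypothesis Hs : forall i : 'I_n, @tr_send A2 letter S c1 (rho_minus rho1 (Ei n i))
   (lab (MM n x x) la (Ei n i)) (vals i) (rho1 (Ei n i)).
Hypothesis Hr : forall i : 'I_n, @tr_recv A2 letter S c1 (rho_minus rho2 (Fi n i))
   (lab (MM n y y) la (Fi n i)) (vals i) (rho2 (Fi n i)).

Lemma rE e : rho n rho1 rho2 e = if inD n e then rho1 e else rho2 e.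
Proof. by []. Qed.

Lemma paste_run : is_run la (MM n x y) (rho n rho1 rho2).
Proof.
split.
  move=> e ee noe.
  have ee' : forall z, is_event (MM n z z) e by move=> z; move: ee; rewrite !is_eventE.
  rewrite labD rE; case: ifP => hD.
    rewrite (rmD n2 rho1 rho2 hD); exact: R1.1 e (ee' x) noe.
  rewrite (rmND n2 agree (negbT hD)); exact: R2.1 e (ee' y) noe.
move=> d e f he.
case hDe: (inD n e); case hDf: (inD n f).
- have [v [h1 h2]] := R1.2 d e f he; exists v.
  by rewrite (labD n x y e) (labD n x y f) hDe hDf !rE hDe hDf (rmD n2 rho1 rho2 hDe) (rmD n2 rho1 rho2 hDf).
- case: d he => /= [[k [kT [Ee Ef]]]|[k [kT [Ee Ef]]]]; subst e f;
    move: hDe hDf; rewrite /inD /bound /=; last by lia.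
  move=> hDe hDf.
  have ki : k - (NN n - n) < n by lia.
  pose i := Ordinal ki.
  have EE : NN n - n + i = k by rewrite /=; lia.
  exists (vals i); split.
    rewrite labD rE /inD /bound /= hDe (rmD n2 rho1 rho2); last by rewrite /inD /bound /=.
    by have := Hs i; rewrite /Ei EE.
  rewrite labD rE /inD /bound /= hDf (rmND n2 agree); last by rewrite /inD /bound /= hDf.
  by have := Hr i; rewrite /Fi EE.
- exfalso; case: d he => /= [[k [kT [Ee Ef]]]|[k [kT [Ee Ef]]]]; subst e f;
    move: hDe hDf; rewrite /inD /bound /=; lia.
- have [v [h1 h2]] := R2.2 d e f he; exists v.
  by rewrite (labD n x y e) (labD n x y f) hDe hDf !rE hDe hDf (rmND n2 agree (negbT hDe)) (rmND n2 agree (negbT hDf)).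
Qed.

Lemma paste_acc : accepting (MM n y y) rho2 -> accepting (MM n x y) (rho n rho1 rho2).
Proof.
rewrite /accepting.
have -> : [ffun p => rho_minus (rho n rho1 rho2) (p, size (word (MM n x y) p))] =
          [ffun p => rho_minus rho2 (p, size (word (MM n y y) p))].
  apply: eq_ffun => p; rewrite !size_w; apply: (rmND n2 agree).
  rewrite /inD /bound /TT /=; case: p; lia.
by [].
Qed.
End Paste2.

Definition Good n (S : cpds A2 letter) (t : seq bool) (I : Locs S * Locs S * {ffun 'I_n -> Val S}) : Prop :=
 exists rho0, is_run la (MM n t t) rho0 /\ accepting (MM n t t) rho0 /\
  rho0 (p1, (bound n p1).-1) = I.1.1 /\ rho0 (p2, (bound n p2).-1) = I.1.2 /\
  (forall i : 'I_n, @tr_send A2 letter S c1 (rho_minus rho0 (Ei n i)) (lab (MM n t t) la (Ei n i)) (I.2 i) (rho0 (Ei n i)) /\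
                    @tr_recv A2 letter S c1 (rho_minus rho0 (Fi n i)) (lab (MM n t t) la (Fi n i)) (I.2 i) (rho0 (Fi n i))).

Lemma good_ex n (S : cpds A2 letter) t : 1 < n -> in_L_cpds la S (MM n t t) ->
  exists I, @Good n S t I.
Proof.
move=> n2 [_ [rho0 [R A]]].
have he : forall i : 'I_n, edge (MM n t t) c1 (Ei n i) (Fi n i).
  move=> i; exists (NN n - n + i); split=> //; rewrite /TT /NN; have := ltn_ord i; lia.
pose vals := [ffun i => proj1_sig (constructive_indefinite_description _ (R.2 _ _ _ (he i)))].
exists (rho0 (p1, (bound n p1).-1), rho0 (p2, (bound n p2).-1), vals).
exists rho0; split; first exact: R; split; first exact: A.
split; first by []; split; first by []; move=> i /=.
rewrite /vals ffunE.
exact: proj2_sig (constructive_indefinite_description _ (R.2 _ _ _ (he i))).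
Qed.

Theorem mainTheorem2 :
  exists phi : mso A2 letter, sentence phi /\
    forall S : cpds A2 letter,
      ~ (forall M : cbm A2 letter,
           in_L_cpds la S M <-> in_L_mso la phi M).
Proof.
exists phi; split; first exact: phi_sentence.
move=> S H.
pose B := (#|Locs S| + #|Val S|).+1.
pose n := 2 * B + 2.
have n2 : 1 < n by rewrite /n; lia.
have goodex : forall t : (NN n).-tuple bool,
    exists I : (Locs S * Locs S * {ffun 'I_n -> Val S})%type, Good t I.
  move=> t; apply: good_ex => //; apply/H; split; first exact: MM_cbm.
  by move=> nu1 nu2; apply: phi_xx.
pose F := fun t => proj1_sig (constructive_indefinite_description _ (goodex t)).
have : ~~ injectiveb F.
  apply/negP => /injectiveP inj; have := leq_card F inj.
  rewrite card_tuple card_bool !card_prod card_ffun card_ord.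
  have := @count_ineq #|Locs S| #|Val S| B n erefl erefl.
  rewrite /NN; lia.
case/injectivePn => t1 [t2 ne Feq].
have G1 := proj2_sig (constructive_indefinite_description _ (goodex t1)).
have G2 := proj2_sig (constructive_indefinite_description _ (goodex t2)).
rewrite -/(F t1) in G1; rewrite -/(F t2) -Feq in G2.
case: G1 => rho1 [R1 [A1 [a1 [b1 s1]]]].
case: G2 => rho2 [R2 [A2' [a2 [b2 s2]]]].
have agree : forall p, rho1 (p, (bound n p).-1) = rho2 (p, (bound n p).-1).
  by case; [rewrite a1 a2 | rewrite b1 b2].
have inL : in_L_cpds la S (MM n t1 t2).
  split; first exact: MM_cbm.
  exists (rho n rho1 rho2); split.
    apply: (paste_run n2 agree R1 R2 (vals := (F t1).2)) => i; [exact: (s1 i).1 | exact: (s2 i).2].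
  exact: paste_acc.
have [_ Hs] := (H _).1 inL.
have [k kN nk] : exists2 k, k < NN n & nth false t1 k != nth false t2 k.
  apply: NNPP => hn; move/negP: ne; apply; apply/eqP; apply: val_inj.
  apply: (eq_from_nth (x0 := false)); first by rewrite !size_tuple.
  move=> k; rewrite size_tuple => kN; apply/eqP; apply: NNPP => hk.
  by apply: hn; exists k => //; apply/negP.
exact: (phi_xy (nu1 := fun _ => (p1, 0)) (nu2 := fun _ _ => True) n2 kN nk (Hs _ _)).
Qed.
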